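(* Let $E$ and $E'$ be disjunctive interval multiplicity expressions (DIMEs) over a finite alphabet $\Sigma$. Then $L(E')\subseteq L(E)$ if and only if $\Delta_{E'}\preccurlyeq \Delta_E$.
   Context: Unordered words are functions $w:\Sigma\to\mathbb{N}_0$; $a\in w$ means $w(a)\neq 0$; $\varepsilon$ is the all-zero word; unordered concatenation $\uplus$ is multiset union, extended to languages pointwise. An interval is $[n,m]$ or $[n,m]^?$ with $n\in\mathbb{N}_0$, $m\in\mathbb{N}_0\cup\{\infty\}$; $L(E^{[n,m]})=\{w_1\uplus\dots\uplus w_i\mid n\le i\le m, w_j\in L(E)\}$, $L(E^{[n,m]^?})=L(E^{[n,m]})\cup\{\varepsilon\}$; the multiplicities $*,+,?,1$ denote $[0,\infty],[1,\infty],[0,1],[1,1]$. Also $L(a)=\{a\}$, $L(E_1\mid E_2)=L(E_1)\cup L(E_2)$, $L(E_1\mathbin{|\hspace{-0.1em}|} E_2)=L(E_1)\uplus L(E_2)$. An atom is $(a_1^{I_1}\mathbin{|\hspace{-0.1em}|}\dots\mathbin{|\hspace{-0.1em}|} a_k^{I_k})$ with $a_i\in\Sigma$ and each $I_i\in\{?,1\}$. A clause is $(A_1^{I_1}\mid\dots\mid A_k^{I_k})$ with atoms $A_i$ and intervals $I_i$; it is simple if each $I_i\in\{?,1\}$. A DIME is $(D_1^{I_1}\mathbin{|\hspace{-0.1em}|}\dots\mathbin{|\hspace{-0.1em}|} D_k^{I_k})$ where for each $i$ either $D_i$ is a simple clause and $I_i\in\{+,*\}$, or $D_i$ is a clause and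 $I_i\in\{1,?\}$; moreover each symbol occurs at most once in the DIME. The characterizing tuple of a DIME $E$ is $\Delta_E=(C_E,N_E,P_E,K_E)$ where $C_E=\{(a,b)\in\Sigma\times\Sigma\mid \neg\exists w\in L(E).\ a\in w\wedge b\in w\}$, $N_E=\{(a,w(a))\mid a\in\Sigma, w\in L(E)\}$, $P_E=\{X\subseteq\Sigma\mid\forall w\in L(E).\ \exists a\in X.\ a\in w\}$, $K_E=\{(a,b)\in\Sigma\times\Sigma\mid\forall w\in L(E).\ w(a)\ge w(b)\}$. We write $\Delta_{E'}\preccurlyeq\Delta_E$ if $C_E\subseteq C_{E'}$, $N_{E'}\subseteq N_E$, $P_E\subseteq P_{E'}$ and $K_E\subseteq K_{E'}$. *)

(* Defs.v *)
From Stdlib Require List.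
From mathcomp Require Import all_boot.
Set Implicit Arguments. Unset Strict Implicit. Unset Printing Implicit Defensive.

Section DIME.
Variable S : finType.

(* unordered words: functions Sigma -> nat *)
Definition word := {ffun S -> nat}.
Definition eps : word := [ffun=> 0%N].
Definition wunion (w1 w2 : word) : word := [ffun a => w1 a + w2 a].
Definition wsym (a : S) : word := [ffun b => nat_of_bool (b == a)].

Definition lang := word -> Prop.
Definition lsym (a : S) : lang := fun w => w = wsym a.
Definition lunion (L1 L2 : lang) : lang :=
  fun w => exists w1 w2, L1 w1 /\ L2 w2 /\ w = wunion w1 w2.
Definition leps : lang := fun w => w = eps.

(* intervals [n,m] (hi = None means infinity), opt = true means [n,m]^? *)
Record interval := Itv { ilo : nat; ihi : option nat; iopt : bool }.
Definition in_itv (I : interval) (i : nat) : Prop :=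
  ilo I <= i /\ (match ihi I with Some m => i <= m | None => True end).
Definition itv_ok (I : interval) : Prop :=
  match ihi I with Some m => ilo I <= m | None => True end.

Inductive iterL (L : lang) : nat -> word -> Prop :=
| iterL0 : iterL L 0 eps
| iterLS i w1 w : L w1 -> iterL L i w -> iterL L i.+1 (wunion w1 w).

Definition lrep (L : lang) (I : interval) : lang :=
  fun w => (exists i, in_itv I i /\ iterL L i w) \/ (iopt I /\ w = eps).

Definition m_star : interval := Itv 0 None false.
Definition m_plus : interval := Itv 1 None false.
Definition m_qm   : interval := Itv 0 (Some 1%N) false.
Definition m_one  : interval := Itv 1 (Some 1%N) false.

(* syntax: atom = list of (symbol, is_optional) ; clause = list of (atom, interval);
   DIME = list of (clause, interval) *)
Definition atom := seq (S * bool).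
Definition clause := seq (atom * interval).
Definition dime := seq (clause * interval).

Definition lang_atom (A : atom) : lang :=
  foldr (fun p L => lunion (lrep (lsym p.1) (if p.2 then m_qm else m_one)) L) leps A.
Definition lang_clause (C : clause) : lang :=
  foldr (fun p L => fun w => lrep (lang_atom p.1) p.2 w \/ L w) (fun _ => False) C.
Definition lang_dime (E : dime) : lang :=
  foldr (fun p L => lunion (lrep (lang_clause p.1) p.2) L) leps E.

Definition clause_ok (C : clause) : Prop :=
  C <> [::] /\ forall p, List.In p C -> p.1 <> [::] /\ itv_ok p.2.
Definition simple_clause (C : clause) : Prop :=
  forall p, List.In p C -> p.2 = m_qm \/ p.2 = m_one.
Definition dime_symbols (E : dime) : seq S :=
  flatten (map (fun p => flatten (map (fun q => map fst q.1) p.1)) E).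
Definition is_dime (E : dime) : Prop :=
  E <> [::] /\
  (forall p, List.In p E ->
     clause_ok p.1 /\
     ((simple_clause p.1 /\ (p.2 = m_plus \/ p.2 = m_star)) \/
      (p.2 = m_one \/ p.2 = m_qm))) /\
  uniq (dime_symbols E).

Definition C_E (E : dime) (a b : S) : Prop :=
  ~ exists w, lang_dime E w /\ 0 < w a /\ 0 < w b.
Definition N_E (E : dime) (a : S) (n : nat) : Prop :=
  exists w, lang_dime E w /\ w a = n.
Definition P_E (E : dime) (X : {set S}) : Prop :=
  forall w, lang_dime E w -> exists a, a \in X /\ 0 < w a.
Definition K_E (E : dime) (a b : S) : Prop :=
  forall w, lang_dime E w -> w b <= w a.

Definition delta_le (E' E : dime) : Prop :=
  (forall a b, C_E E a b -> C_E E' a b) /\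
  (forall a n, N_E E' a n -> N_E E a n) /\
  (forall X, P_E E X -> P_E E' X) /\
  (forall a b, K_E E a b -> K_E E' a b).

End DIME.

(* Main.v *)
Require Import Defs.
From mathcomp Require Import all_boot zify.
From Stdlib Require Import Classical.
Set Implicit Arguments. Unset Strict Implicit. Unset Printing Implicit Defensive.

Section Proofs.
Variable S : finType.
Implicit Types (w u v : word S) (L : lang S).

Lemma wunionE w1 w2 x : wunion w1 w2 x = w1 x + w2 x.
Proof. by rewrite ffunE. Qed.
Lemma epsE (x : S) : eps S x = 0.
Proof. by rewrite ffunE. Qed.
Lemma wsymE (a x : S) : wsym a x = (x == a).
Proof. by rewrite ffunE. Qed.
Lemma word_eq w1 w2 : (forall x, w1 x = w2 x) -> w1 = w2.
Proof. by move=> H; apply/ffunP. Qed.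

Lemma wunion0w w : wunion (eps S) w = w.
Proof. by apply: word_eq => x; rewrite wunionE epsE. Qed.
Lemma wunionw0 w : wunion w (eps S) = w.
Proof. by apply: word_eq => x; rewrite wunionE epsE addn0. Qed.
Lemma wunionA w1 w2 w3 : wunion (wunion w1 w2) w3 = wunion w1 (wunion w2 w3).
Proof. by apply: word_eq => x; rewrite !wunionE addnA. Qed.
Lemma wunionC w1 w2 : wunion w1 w2 = wunion w2 w1.
Proof. by apply: word_eq => x; rewrite !wunionE addnC. Qed.

Lemma iterL_inv0 L w : iterL L 0 w -> w = eps S.
Proof. by move=> H; inversion H. Qed.
Lemma iterL_invS L i w : iterL L i.+1 w ->
  exists w1 w2, L w1 /\ iterL L i w2 /\ w = wunion w1 w2.
Proof. move=> H; inversion H; subst; by exists w1, w0. Qed.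

Lemma iterL_cat L i j u v : iterL L i u -> iterL L j v -> iterL L (i + j) (wunion u v).
Proof.
elim=> [|k w1 w Hw1 Hw IH] Hv; first by rewrite add0n wunion0w.
rewrite addSn wunionA; apply: iterLS => //; exact: IH.
Qed.

Lemma iterL_mono L L' i w : (forall w, L w -> L' w) -> iterL L i w -> iterL L' i w.
Proof. move=> H; elim=> [|k w1 w0 H1 _ IH]; [exact: iterL0| exact: (iterLS (H _ H1) IH)]. Qed.

Lemma iterL_one L w : L w -> iterL L 1 w.
Proof. by move=> H; rewrite -(wunionw0 w); apply: iterLS => //; apply: iterL0. Qed.

Lemma iterL_prop L (Q : word S -> Prop) i w :
  Q (eps S) -> (forall u v, Q u -> Q v -> Q (wunion u v)) ->
  (forall u, L u -> Q u) -> iterL L i w -> Q w.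
Proof. move=> H0 HU HL; elim=> // k w1 w0 H1 _ IH; exact: HU (HL _ H1) IH. Qed.

Lemma lrep_prop L (Q : word S -> Prop) I w :
  Q (eps S) -> (forall u v, Q u -> Q v -> Q (wunion u v)) ->
  (forall u, L u -> Q u) -> lrep L I w -> Q w.
Proof.
move=> H0 HU HL [[i [_ Hi]]|[_ ->]] //; exact: iterL_prop Hi.
Qed.

Lemma lrep_one L w : lrep L m_one w <-> L w.
Proof.
split.
- case=> [[i [[/= H1 H2] Hi]]|[//]].
  have Ei : i = 1 by lia.
  subst i.
  case/iterL_invS: Hi => w1 [w2 [H [/iterL_inv0 -> ->]]]; by rewrite wunionw0.
- move=> H; left; exists 1; split; first by split.
  exact: iterL_one.
Qed.

Lemma lrep_qm L w : lrep L m_qm w <-> w = eps S \/ L w.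
Proof.
split.
- case=> [[i [[/= H1 H2] Hi]]|[//]].
  case: i H1 H2 Hi => [_ _ /iterL_inv0 ->|[|//] _ _]; first by left.
  case/iterL_invS => w1 [w2 [H [/iterL_inv0 -> ->]]]; by rewrite wunionw0; right.
- case=> [->|H]; left.
  + exists 0; split; [by split|exact: iterL0].
  + exists 1; split; [by split|exact: iterL_one].
Qed.

Lemma iterL_nonempty L u n : L u -> exists w, iterL L n w.
Proof.
move=> Hu; elim: n => [|n [w Hw]]; first by exists (eps S); apply: iterL0.
by exists (wunion u w); apply: iterLS.
Qed.

Lemma lrep_nonempty L I : itv_ok I -> (exists u, L u) -> exists w, lrep L I w.
Proof.
move=> Hok [u Hu]; have [w Hw] := iterL_nonempty (ilo I) Hu.
exists w; left; exists (ilo I); split => //; split => //.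
Qed.


Definition loA (A : atom S) (x : S) : bool := (x, false) \in A.
Definition hiA (A : atom S) (x : S) : bool := x \in map fst A.

Lemma loA_hiA A x : loA A x -> hiA A x.
Proof. by move=> H; rewrite /hiA; exact: (map_f fst H). Qed.

Lemma lang_atom_cons (p : S * bool) (A : atom S) :
  lang_atom (p :: A) = lunion (lrep (lsym p.1) (if p.2 then m_qm else m_one)) (lang_atom A).
Proof. by []. Qed.

Lemma lsym_rep (a : S) (b : bool) w :
  lrep (lsym a) (if b then m_qm else m_one) w <->
  (forall x, ((x == a) && ~~ b) <= w x <= (x == a)).
Proof.
split.
- case: b.
  + move/lrep_qm => [->|->] x; rewrite ?epsE ?wsymE ?andbF //.
    by case: (x == a).
  + move/lrep_one => -> x; rewrite wsymE andbT; by case: (x == a).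
- move=> H.
  have Hne x : x != a -> w x = 0.
    by move=> /negbTE Hx; move: (H x); rewrite Hx /=; lia.
  case: b H => H.
  + apply/lrep_qm; move: (H a); rewrite eqxx /= => Ha.
    case Hw : (w a) => [|k].
    * left; apply: word_eq => x; rewrite epsE.
      by case: (eqVneq x a) => [->|/Hne] //.
    * right; apply: word_eq => x; rewrite wsymE.
      case: (eqVneq x a) => [->|/Hne] //; lia.
  + apply/lrep_one; apply: word_eq => x; rewrite wsymE.
    case: (eqVneq x a) => [->|/Hne ->] //; move: (H a); rewrite eqxx /=; lia.
Qed.

Lemma atom_char (A : atom S) w : uniq (map fst A) ->
  (lang_atom A w <-> forall x, loA A x <= w x <= hiA A x).
Proof.
elim: A w => [|[a b] A IH] w.
- move=> _; split.
  + by move=> -> x; rewrite epsE.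
  + move=> H; apply: word_eq => x; rewrite epsE; move: (H x).
    rewrite /loA /hiA /=; lia.
- move=> /andP[Ha Hu].
  have HAa : hiA A a = false by apply/negbTE.
  have HAa' : loA A a = false by apply/negP => /loA_hiA; rewrite HAa.
  have Elo x : loA ((a, b) :: A) x = ((x == a) && ~~ b) || loA A x.
    rewrite /loA in_cons; congr (_ || _).
  have Ehi x : hiA ((a, b) :: A) x = (x == a) || hiA A x.
    by rewrite /hiA /= in_cons.
  rewrite lang_atom_cons /=; split.
  + case=> [w1 [w2 [/lsym_rep H1 [/(IH _ Hu) H2 ->]]]] x.
    rewrite wunionE Elo Ehi; move: (H1 x) (H2 x).
    case: (eqVneq x a) => [->|_] /=; rewrite ?HAa ?HAa' ?orbF //=.
    * by destruct b; simpl; lia.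
    * by case: (loA A x); case: (hiA A x); lia.
  + move=> H.
    exists [ffun x => if x == a then w x else 0], [ffun x => if x == a then 0 else w x].
    split; [|split].
    * apply/lsym_rep => x; rewrite ffunE; move: (H x); rewrite Elo Ehi.
      case: (eqVneq x a) => [->|_] /=; rewrite ?HAa ?HAa' ?orbF //=.
    * apply/(IH _ Hu) => x; rewrite ffunE; move: (H x); rewrite Elo Ehi.
      case: (eqVneq x a) => [->|_] /=; rewrite ?HAa ?HAa' ?orbF //=.
    * apply: word_eq => x; rewrite wunionE !ffunE.
      by case: (x == a); rewrite ?addn0.
Qed.

Lemma atom_iter (A : atom S) i w : uniq (map fst A) ->
  (iterL (lang_atom A) i w <-> forall x, i * loA A x <= w x <= i * hiA A x).
Proof.
move=> Hu; split.
- elim=> [|k w1 w0 /(atom_char _ Hu) H1 _ IH] x; first by rewrite epsE; lia.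
  rewrite wunionE; move: (H1 x) (IH x) (@loA_hiA A x).
  case: (loA A x); case: (hiA A x) => //=; lia.
- elim: i w => [|i IH] w H.
  + have -> : w = eps S by apply: word_eq => x; rewrite epsE; move: (H x); lia.
    exact: iterL0.
  + have -> : w = wunion [ffun x => minn (w x) 1] [ffun x => w x - minn (w x) 1].
      by apply: word_eq => x; rewrite wunionE !ffunE; lia.
    apply: iterLS.
    * apply/(atom_char _ Hu) => x; rewrite ffunE; move: (H x) (@loA_hiA A x).
      case: (loA A x); case: (hiA A x) => //=; lia.
    * apply: IH => x; rewrite ffunE; move: (H x) (@loA_hiA A x).
      case: (loA A x); case: (hiA A x) => //=; lia.
Qed.


Section Flat.
Variable T : Type.
Variable f : T -> seq S.

Lemma mem_flatten_map (s : seq T) x :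
  x \in flatten (map f s) <-> exists p, List.In p s /\ x \in f p.
Proof.
elim: s => [|p s IH] /=; first by split=> // [[p []]].
rewrite mem_cat; split.
- case/orP=> [H|/IH [q [Hq Hx]]]; first by exists p; split; [left|].
  by exists q; split; [right|].
- case=> q [[<-|Hq] Hx]; first by rewrite Hx.
  by apply/orP; right; apply/IH; exists q.
Qed.

Lemma uniq_flatten_in (s : seq T) p :
  uniq (flatten (map f s)) -> List.In p s -> uniq (f p).
Proof.
elim: s => [|q s IH] //= ; rewrite cat_uniq => /and3P[H1 _ H3] [<-|Hp] //.
exact: IH.
Qed.

Lemma uniq_flatten_same (s : seq T) p q x :
  uniq (flatten (map f s)) -> List.In p s -> List.In q s ->
  x \in f p -> x \in f q -> p = q.
Proof.
elim: s => [|r s IH] //=; rewrite cat_uniq => /and3P[H1 H2 H3] Hp Hq Hxp Hxq.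
case: Hp => [Ep|Hp]; case: Hq => [Eq|Hq].
- by rewrite -Ep -Eq.
- subst r; case/negP: (H2 ); apply/hasP; exists x => //.
  by apply/mem_flatten_map; exists q.
- subst r; case/negP: (H2 ); apply/hasP; exists x => //.
  by apply/mem_flatten_map; exists p.
- exact: IH.
Qed.
End Flat.

Definition Latom (q : atom S * interval) : lang S := lrep (lang_atom q.1) q.2.
Definition csyms (D : clause S) : seq S := flatten (map (fun q => map fst q.1) D).

Lemma clause_char (D : clause S) w :
  lang_clause D w <-> exists q, List.In q D /\ Latom q w.
Proof.
elim: D => [|q D IH] /=; first by split=> // [[q []]].
split.
- case=> [H|/IH [q' [Hq H]]]; first by exists q; split; [left|].
  by exists q'; split; [right|].
- case=> q' [[<-|Hq] H]; first by left.
  by right; apply/IH; exists q'.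
Qed.

Definition vanish L (s : seq S) := forall u, L u -> forall x, x \notin s -> u x = 0.

Lemma vanish_lrep L I s : vanish L s -> vanish (lrep L I) s.
Proof.
move=> H u Hu; apply: (lrep_prop (Q := fun u => forall x, x \notin s -> u x = 0)) Hu.
- by move=> x _; rewrite epsE.
- by move=> u1 u2 H1 H2 x Hx; rewrite wunionE H1 ?H2.
- exact: H.
Qed.

Lemma vanish_atom (A : atom S) : uniq (map fst A) -> vanish (lang_atom A) (map fst A).
Proof.
move=> Hu u /(atom_char _ Hu) H x Hx; move: (H x); rewrite /hiA (negbTE Hx); lia.
Qed.

Lemma vanish_Latom q : uniq (map fst q.1) -> vanish (Latom q) (map fst q.1).
Proof. by move=> Hu; apply: vanish_lrep; exact: vanish_atom. Qed.

Lemma vanish_clause (D : clause S) : uniq (csyms D) -> vanish (lang_clause D) (csyms D).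
Proof.
move=> Hu u /clause_char [q [Hq Hu']] x Hx.
apply: (vanish_Latom _ Hu') => //.
  exact: (uniq_flatten_in Hu Hq).
apply: contra Hx => Hx; apply/mem_flatten_map; by exists q.
Qed.

Lemma Latom_clause (D : clause S) q u : List.In q D -> uniq (csyms D) ->
  lang_clause D u -> forall x, x \in map fst q.1 -> 0 < u x -> Latom q u.
Proof.
move=> Hq Hu /clause_char [q' [Hq' Hu']] x Hx Hpos.
have Hx' : x \in map fst q'.1.
  apply: contraLR Hpos => Hn; rewrite -leqNgt leqn0; apply/eqP.
  exact: (vanish_Latom (uniq_flatten_in Hu Hq') Hu').
by rewrite (uniq_flatten_same Hu Hq Hq' Hx Hx').
Qed.

Lemma K_clause (D : clause S) q x r : List.In q D -> uniq (csyms D) ->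
  x \in map fst q.1 -> (r, false) \in q.1 ->
  forall v, lang_clause D v -> v x <= v r.
Proof.
move=> Hq Hu Hx Hr v Hv.
have HuA := uniq_flatten_in Hu Hq.
case: (posnP (v x)) => [->//|Hpos].
have := Latom_clause Hq Hu Hv Hx Hpos.
apply: (lrep_prop (Q := fun v => v x <= v r)) => //.
- by rewrite !epsE.
- by move=> u1 u2 H1 H2; rewrite !wunionE; lia.
- move=> u /(atom_char _ HuA) H; move: (H x) (H r).
  have -> : hiA q.1 x by [].
  have -> : loA q.1 r by [].
  lia.
Qed.


Definition satL L w :=
 (forall a, exists u, L u /\ u a = w a) /\
 (forall a b, ~ (exists u, L u /\ 0 < u a /\ 0 < u b) -> ~ (0 < w a /\ 0 < w b)) /\
 (forall X : {set S}, (forall u, L u -> exists a, a \in X /\ 0 < u a) ->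
     exists a, a \in X /\ 0 < w a) /\
 (forall a b, (forall u, L u -> u b <= u a) -> w b <= w a).

Lemma nonzero w : w <> eps S -> exists a, 0 < w a.
Proof.
move=> H; apply: NNPP => Hn; apply: H; apply: word_eq => x; rewrite epsE.
case: (posnP (w x)) => // Hx; case: Hn; by exists x.
Qed.

Lemma sat_vanish L s w : satL L w -> vanish L s -> forall x, x \notin s -> w x = 0.
Proof.
move=> [HN _] HV x Hx; have [u [Hu <-]] := HN x; exact: HV.
Qed.

Lemma sat_eps L w : satL L w -> w = eps S -> L (eps S).
Proof.
move=> [_ [_ [HP _]]] Hw; apply: NNPP => Hn.
have [a [_ Ha]] : exists a, a \in [set: S] /\ 0 < w a.
  apply: HP => u Hu; have [a Ha] : exists a, 0 < u a.
    by apply: nonzero => E; apply: Hn; rewrite -E.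
  by exists a; rewrite in_setT.
by move: Ha; rewrite Hw epsE.
Qed.

Lemma sat_ext L L' w : (forall u, L u <-> L' u) -> satL L w -> satL L' w.
Proof.
move=> E [HN [HC [HP HK]]]; split; [|split; [|split]].
- move=> a; have [u [Hu Ha]] := HN a; exists u; split => //; exact/E.
- move=> a b H; apply: HC => [[u [Hu Hab]]]; apply: H; exists u; split => //; exact/E.
- move=> X H; apply: HP => u Hu; apply: H; exact/E.
- move=> a b H; apply: HK => u Hu; apply: H; exact/E.
Qed.

Definition restr (P : pred S) w : word S := [ffun x => if P x then w x else 0].

Lemma restr_split (P : pred S) w : w = wunion (restr P w) (restr (predC P) w).
Proof. by apply: word_eq => x; rewrite wunionE !ffunE /=; case: (P x); rewrite ?addn0. Qed.

Lemma sat_split L1 L2 (P : pred S) w :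
  (forall u, L1 u -> forall x, ~~ P x -> u x = 0) ->
  (forall u, L2 u -> forall x, P x -> u x = 0) ->
  (exists u, L1 u) -> (exists u, L2 u) ->
  satL (lunion L1 L2) w -> satL L1 (restr P w).
Proof.
move=> V1 V2 [u1 Hu1] [u2 Hu2] [HN [HC [HP HK]]]; split; [|split; [|split]].
- move=> a; rewrite ffunE; case Pa: (P a).
  + have [u [[v1 [v2 [H1 [H2 ->]]]] <-]] := HN a.
    by exists v1; split => //; rewrite wunionE (V2 _ H2 a Pa) addn0.
  + by exists u1; split => //; apply: V1 => //; rewrite Pa.
- move=> a b H; rewrite !ffunE; case Pa: (P a); case Pb: (P b) => //; try lia.
  apply: HC => [[u [[v1 [v2 [H1 [H2 ->]]]] []]]]; rewrite !wunionE.
  rewrite (V2 _ H2 a Pa) (V2 _ H2 b Pb) !addn0 => Ha Hb.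
  by apply: H; exists v1.
- move=> X H.
  have [a [Ha Hw]] : exists a, a \in [set x in X | P x] /\ 0 < w a.
    apply: HP => u [v1 [v2 [H1 [H2 ->]]]].
    have [a [Ha Hv]] := H v1 H1.
    have Pa : P a by apply: contraLR Hv => /(V1 _ H1 a) ->.
    by exists a; rewrite inE Ha Pa wunionE; split => //; lia.
  move: Ha; rewrite inE => /andP[Ha Pa].
  by exists a; rewrite ffunE Pa.
- move=> a b H; rewrite !ffunE; case Pb: (P b) => //; case Pa: (P a).
  + apply: HK => u [v1 [v2 [H1 [H2 ->]]]]; rewrite !wunionE.
    rewrite (V2 _ H2 a Pa) (V2 _ H2 b Pb) !addn0; exact: H.
  + have [u [[v1 [v2 [H1 [H2 E]]]] Hb]] := HN b.
    rewrite -Hb E wunionE (V2 _ H2 b Pb) addn0.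
    have := H v1 H1; rewrite (V1 _ H1 a) ?Pa //; lia.
Qed.

Lemma lunionC L1 L2 u : lunion L1 L2 u <-> lunion L2 L1 u.
Proof.
by split=> -[v1 [v2 [H1 [H2 ->]]]]; exists v2, v1; rewrite wunionC.
Qed.


Lemma atom_build_req (A : atom S) w r : uniq (map fst A) ->
  (forall x, x \notin map fst A -> w x = 0) -> (r, false) \in A ->
  (forall x, x \in map fst A -> w x <= w r) ->
  (forall x, (x, false) \in A -> w r <= w x) -> iterL (lang_atom A) (w r) w.
Proof.
move=> Hu H0 Hr H1 H2; apply/(atom_iter _ _ Hu) => x.
rewrite /loA /hiA; case Hh: (x \in map fst A).
- case Hl: ((x, false) \in A); rewrite ?muln1 ?muln0 ?H2 ?H1 //.
- have Hl : ((x, false) \in A) = false.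
    by apply/negP => /loA_hiA; rewrite /hiA Hh.
  by rewrite Hl !muln0 H0 ?Hh.
Qed.

Lemma atom_build_opt (A : atom S) w i : uniq (map fst A) ->
  (forall x, x \notin map fst A -> w x = 0) -> (forall x, loA A x = false) ->
  (forall x, w x <= i) -> iterL (lang_atom A) i w.
Proof.
move=> Hu H0 Hl H1; apply/(atom_iter _ _ Hu) => x.
rewrite Hl muln0 /=; rewrite /hiA; case Hh: (x \in map fst A).
- by rewrite muln1.
- by rewrite H0 ?Hh.
Qed.

Lemma lrep_iter_val (A : atom S) J u x : uniq (map fst A) -> lrep (lang_atom A) J u ->
  0 < u x -> exists i, in_itv J i /\ iterL (lang_atom A) i u.
Proof.
move=> Hu [[i [Hi Hit]]|[_ E]] Hx; first by exists i.
by move: Hx; rewrite E epsE.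
Qed.

Lemma factorA (D : clause S) I w : uniq (csyms D) -> clause_ok D ->
  (I = m_one \/ I = m_qm) -> satL (lrep (lang_clause D) I) w -> lrep (lang_clause D) I w.
Proof.
move=> Hu [HDne HDok] HI Hsat.
set F := lrep (lang_clause D) I.
have HF1 : forall u, F u -> u = eps S \/ lang_clause D u.
  by move=> u; rewrite /F; case: HI => ->; [move/lrep_one; right|move/lrep_qm].
have HF2 : forall u, lang_clause D u -> F u.
  by move=> u Hu'; rewrite /F; case: HI => ->; [apply/lrep_one|apply/lrep_qm; right].
have HF3 : forall u x, F u -> 0 < u x -> lang_clause D u.
  move=> u x /HF1 [->|//]; by rewrite epsE.
case: (eqVneq w (eps S)) => [E|Hne]; first by rewrite E; exact: sat_eps Hsat E.
have [a0 Ha0] := nonzero (fun E => (negP Hne) (introT eqP E)).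
have Hsat' := Hsat; case: Hsat' => [HN [HC [HP HK]]].
have [u [Fu Eu]] := HN a0.
have Hu0 : 0 < u a0 by rewrite Eu.
have [q [Hq Hqu]] := proj1 (clause_char D u) (HF3 _ _ Fu Hu0).
have HuA : uniq (map fst q.1) := uniq_flatten_in Hu Hq.
have Ha0q : a0 \in map fst q.1.
  apply: contraLR Hu0 => Hn; rewrite -leqNgt leqn0; apply/eqP.
  exact: (vanish_Latom HuA Hqu).
have HFq : forall u x, F u -> x \in map fst q.1 -> 0 < u x -> Latom q u.
  move=> u' x Fu' Hx Hpos; exact: (Latom_clause Hq Hu (HF3 _ _ Fu' Hpos) Hx Hpos).
have Hsupp : forall b, b \notin map fst q.1 -> w b = 0.
  move=> b Hb.
  have : ~ (0 < w a0 /\ 0 < w b).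
    apply: HC => -[u' [Fu' [H1 H2]]].
    have := HFq _ _ Fu' Ha0q H1 => /(vanish_Latom HuA) /(_ b Hb); lia.
  lia.
apply: HF2; apply/clause_char; exists q; split => //.
have Hqok := HDok q Hq; case: Hqok => _ Hitv.
rewrite /Latom; left.
case: (classic (exists r, (r, false) \in q.1)) => [[r Hr]|Hnr].
- have Hr' : r \in map fst q.1 := loA_hiA Hr.
  have HKF : forall x y, x \in map fst q.1 -> (y, false) \in q.1 -> w x <= w y.
    move=> x y Hx Hy; apply: HK => u' /HF1 [->|Hc]; first by rewrite !epsE.
    exact: (K_clause Hq Hu Hx Hy).
  have Hpos : 0 < w r by have := HKF _ _ Ha0q Hr; lia.
  exists (w r); split; last first.
    apply: atom_build_req => //; [move=> x Hx; exact: HKF|move=> x Hx; exact: HKF].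
  have [u' [Fu' Eu']] := HN r.
  have Hpos' : 0 < u' r by rewrite Eu'.
  have [i [Hi Hit]] := lrep_iter_val HuA (HFq _ _ Fu' Hr' Hpos') Hpos'.
  move/(atom_iter _ _ HuA): Hit => /(_ r).
  have -> : loA q.1 r by [].
  have -> : hiA q.1 r by [].
  rewrite Eu' muln1 => Hb.
  have -> : w r = i by lia.
  done.
- have Hlo : forall x, loA q.1 x = false.
    by move=> x; apply/negP => H; apply: Hnr; exists x.
  have Hbnd : forall m, ihi q.2 = Some m -> forall x, w x <= m.
    move=> m Hm x; case: (posnP (w x)) => [->//|Hx].
    have Hxq : x \in map fst q.1.
      by apply: contraLR Hx => /Hsupp ->; rewrite ltnn.
    have [u' [Fu' Eu']] := HN x.
    have Hpos' : 0 < u' x by rewrite Eu'.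
    have [i [[_ Hi] Hit]] := lrep_iter_val HuA (HFq _ _ Fu' Hxq Hpos') Hpos'.
    move/(atom_iter _ _ HuA): Hit => /(_ x).
    have -> : hiA q.1 x by [].
    rewrite Hm in Hi; rewrite Eu'; lia.
  exists (maxn (ilo q.2) (\max_(x : S) w x)); split.
  + split; first exact: leq_maxl.
    move: Hitv Hbnd; rewrite /itv_ok; case: (ihi q.2) => [m|//] Hlm Hbnd.
    rewrite geq_max Hlm /=; apply/bigmax_leqP => x _; exact: Hbnd.
  + apply: atom_build_opt => // x.
    rewrite leq_max; apply/orP; right; exact: leq_bigmax.
Qed.


Lemma factorB (D : clause S) I w : uniq (csyms D) -> clause_ok D -> simple_clause D ->
  (I = m_plus \/ I = m_star) -> satL (lrep (lang_clause D) I) w -> lrep (lang_clause D) I w.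
Proof.
move=> Hu [HDne HDok] Hsimp HI Hsat.
case: (eqVneq w (eps S)) => [E|Hne]; first by rewrite E; exact: sat_eps Hsat E.
have Hsat' := Hsat; case: Hsat' => [HN [HC [HP HK]]].
have HKF : forall q, List.In q D -> forall x y, x \in map fst q.1 -> (y, false) \in q.1 ->
    w x <= w y.
  move=> q Hq x y Hx Hy; apply: HK => u.
  apply: (lrep_prop (Q := fun u => u x <= u y)).
  - by rewrite !epsE.
  - by move=> u1 u2 H1 H2; rewrite !wunionE; lia.
  - exact: (K_clause Hq Hu Hx Hy).
have Hvan : forall x, x \notin csyms D -> w x = 0.
  apply: (sat_vanish Hsat); apply: vanish_lrep; exact: vanish_clause.
have Hatom : forall q, List.In q D -> forall u, lang_atom q.1 u -> lang_clause D u.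
  move=> q Hq u Hu'; apply/clause_char; exists q; split => //; rewrite /Latom.
  by case: (Hsimp q Hq) => ->; [apply/lrep_qm; right|apply/lrep_one].
have Hper : forall q, List.In q D ->
    exists k, iterL (lang_atom q.1) k (restr (fun x => x \in map fst q.1) w).
  move=> q Hq; have HuA : uniq (map fst q.1) := uniq_flatten_in Hu Hq.
  set v := restr _ w.
  have Hv0 : forall x, x \notin map fst q.1 -> v x = 0.
    by move=> x Hx; rewrite ffunE (negbTE Hx).
  have Hv1 : forall x, x \in map fst q.1 -> v x = w x.
    by move=> x Hx; rewrite ffunE Hx.
  case: (classic (exists r, (r, false) \in q.1)) => [[r Hr]|Hnr].
  - have Hr' : r \in map fst q.1 := loA_hiA Hr.
    exists (v r); apply: atom_build_req => // x Hx.
    + by rewrite !Hv1 //; exact: (HKF q Hq x r Hx Hr).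
    + rewrite !Hv1; [exact: (HKF q Hq r x Hr' Hx)|exact: (loA_hiA Hx)|done].
  - exists (\max_(x : S) v x); apply: atom_build_opt => //.
    + by move=> x; apply/negP => H; apply: Hnr; exists x.
    + by move=> x; exact: leq_bigmax.
have Hcomb : forall Ds, (forall q, List.In q Ds -> List.In q D) -> uniq (csyms Ds) ->
    exists k, iterL (lang_clause D) k (restr (fun x => x \in csyms Ds) w).
  elim=> [|q Ds IH] Hsub HuDs.
  - exists 0; have -> : restr (fun x => x \in csyms [::]) w = eps S.
      by apply: word_eq => x; rewrite !ffunE.
    exact: iterL0.
  - have Hq : List.In q D by apply: Hsub; left.
    move: HuDs; rewrite /csyms /= -/(csyms Ds) cat_uniq => /and3P[_ Hdis HuDs].
    have [k1 Hk1] := Hper q Hq.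
    have [k2 Hk2] := IH (fun q' H => Hsub q' (or_intror H)) HuDs.
    exists (k1 + k2).
    have -> : restr (fun x => x \in map fst q.1 ++ csyms Ds) w =
              wunion (restr (fun x => x \in map fst q.1) w) (restr (fun x => x \in csyms Ds) w).
      apply: word_eq => x; rewrite wunionE !ffunE mem_cat.
      case Hx1: (x \in map fst q.1); case Hx2: (x \in csyms Ds) => //=; rewrite ?addn0 //.
      by case/negP: Hdis; apply/hasP; exists x.
    apply: iterL_cat => //; exact: iterL_mono (Hatom q Hq) Hk1.
have [k Hk] := Hcomb D (fun q H => H) Hu.
have Ew : restr (fun x => x \in csyms D) w = w.
  apply: word_eq => x; rewrite ffunE; case Hx: (x \in csyms D) => //.
  by rewrite Hvan ?Hx.
rewrite Ew in Hk.
have Hk1 : 0 < k.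
  case: k Hk => // /iterL_inv0 E; by rewrite E eqxx in Hne.
left; exists k; split => //; by case: HI => ->.
Qed.


Definition fok (p : clause S * interval) : Prop :=
  clause_ok p.1 /\
  ((simple_clause p.1 /\ (p.2 = m_plus \/ p.2 = m_star)) \/ (p.2 = m_one \/ p.2 = m_qm)).

Lemma factor (p : clause S * interval) w : uniq (csyms p.1) -> fok p ->
  satL (lrep (lang_clause p.1) p.2) w -> lrep (lang_clause p.1) p.2 w.
Proof.
move=> Hu [Hok [[Hs HI]|HI]] Hsat; [exact: factorB|exact: factorA].
Qed.

Lemma atom_nonempty (A : atom S) : uniq (map fst A) -> exists u, lang_atom A u.
Proof.
move=> Hu; exists [ffun x => nat_of_bool (loA A x)]; apply/(atom_char _ Hu) => x.
rewrite ffunE leqnn /=; case H: (loA A x) => //=; by rewrite (loA_hiA H).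
Qed.

Lemma factor_nonempty (p : clause S * interval) : uniq (csyms p.1) -> fok p ->
  exists u, lrep (lang_clause p.1) p.2 u.
Proof.
move=> Hu [[HDne HDok] HI]; apply: lrep_nonempty.
  by case: HI => [[_ [->|->]]|[->|->]].
case HD: p.1 HDne HDok Hu => [//|q D] _ HDok Hu.
have Hq : List.In q (q :: D) by left.
have [_ Hitv] := HDok q Hq.
have HuA : uniq (map fst q.1) := uniq_flatten_in Hu Hq.
have [u Hu'] := lrep_nonempty Hitv (atom_nonempty HuA).
by exists u; apply/clause_char; exists q.
Qed.

Lemma vanish_dime (E : dime S) : uniq (dime_symbols E) -> vanish (lang_dime E) (dime_symbols E).
Proof.
elim: E => [|p E IH] /=.
- by move=> _ u -> x _; rewrite epsE.
- rewrite cat_uniq => /and3P[Hu1 _ Hu2] u [u1 [u2 [H1 [H2 ->]]]] x.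
  rewrite mem_cat negb_or => /andP[Hx1 Hx2].
  rewrite wunionE (IH Hu2 _ H2 x Hx2) addn0.
  exact: (vanish_lrep (vanish_clause Hu1) H1).
Qed.

Lemma dime_nonempty (E : dime S) : uniq (dime_symbols E) -> (forall p, List.In p E -> fok p) ->
  exists u, lang_dime E u.
Proof.
elim: E => [|p E IH] /=; first by exists (eps S).
rewrite cat_uniq => /and3P[Hu1 _ Hu2] Hok.
have [u1 H1] := factor_nonempty Hu1 (Hok p (or_introl erefl)).
have [u2 H2] := IH Hu2 (fun q H => Hok q (or_intror H)).
by exists (wunion u1 u2), u1, u2.
Qed.

Lemma dime_main (E : dime S) w : uniq (dime_symbols E) -> (forall p, List.In p E -> fok p) ->
  satL (lang_dime E) w -> lang_dime E w.
Proof.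
elim: E w => [|p E IH] w.
- move=> _ _ [HN _]; apply: word_eq => x; rewrite epsE.
  by have [u [-> <-]] := HN x; rewrite epsE.
- move=> Hu Hok Hsat; move: Hu; rewrite /= cat_uniq => /and3P[Hu1 Hdis Hu2].
  have HokE : forall q, List.In q E -> fok q := fun q H => Hok q (or_intror H).
  have Hokp := Hok p (or_introl erefl).
  set P := fun x => x \in csyms p.1.
  have V1 : forall u, lrep (lang_clause p.1) p.2 u -> forall x, ~~ P x -> u x = 0.
    move=> u Hu' x Hx; exact: (vanish_lrep (vanish_clause Hu1) Hu').
  have V2 : forall u, lang_dime E u -> forall x, P x -> u x = 0.
    move=> u Hu' x Hx; apply: (vanish_dime Hu2 Hu').
    by apply/negP => Hx'; case/negP: Hdis; apply/hasP; exists x.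
  have Ne1 := factor_nonempty Hu1 Hokp.
  have Ne2 := dime_nonempty Hu2 HokE.
  have S1 := sat_split V1 V2 Ne1 Ne2 Hsat.
  have S2 : satL (lang_dime E) (restr (predC P) w).
    apply: (sat_split (L1 := lang_dime E) (L2 := lrep (lang_clause p.1) p.2)).
    + by move=> u Hu' x /negPn Hx; exact: V2.
    + by move=> u Hu' x Hx; exact: V1.
    + exact: Ne2.
    + exact: Ne1.
    + apply: sat_ext Hsat => u; exact: lunionC.
  exists (restr P w), (restr (predC P) w); split; [|split].
  + exact: factor.
  + exact: IH.
  + exact: restr_split.
Qed.

End Proofs.

Theorem lemma2 (S : finType) (E E' : dime S) :
  is_dime E -> is_dime E' ->
  ((forall w, lang_dime E' w -> lang_dime E w) <-> delta_le E' E).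
Proof.
move=> [_ [HE HuE]] _; split.
- move=> Hsub; split; [|split; [|split]].
  + move=> a b HC [w [Hw Hab]]; apply: HC; exists w; split => //; exact: Hsub.
  + move=> a n [w [Hw Hn]]; exists w; split => //; exact: Hsub.
  + move=> X HP w Hw; exact: HP _ (Hsub _ Hw).
  + move=> a b HK w Hw; exact: HK _ (Hsub _ Hw).
- move=> [HC [HN [HP HK]]] w Hw; apply: dime_main => //.
  split; [|split; [|split]].
  + by move=> a; apply: HN; exists w.
  + move=> a b Hn [Ha Hb]; apply: (HC a b Hn); by exists w.
  + move=> X HX; exact: HP HX w Hw.
  + move=> a b Hab; exact: HK a b Hab w Hw.
Qed.
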